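(* Let $\alpha\in\mathbb{C}\smallsetminus\{0,1\}$. The irreducible curves of negative self-intersection on $Y_\alpha$ are precisely the exceptional curves $E(0,0)$, $E(1,i)$, $E(\alpha,\alpha i)$, $E(1,-i)$, $E(\alpha,-\alpha i)$ and the strict transforms of the lines $x+iy=0$, $x-iy=0$, $x-z=0$, $(\alpha+1)x+(\alpha-1)iy-2\alpha z=0$, $(\alpha+1)x-(\alpha-1)iy-2\alpha z=0$ and $x-\alpha z=0$.
   Context: $Y_\alpha$ is the blow-up of $\mathbb{P}^2_{\mathbb{C}}$ (coordinates $[x:y:z]$, affine chart $z=1$ with coordinates $(x,y)$) in the five points $(0,0)$, $(1,i)$, $(\alpha,\alpha i)$, $(1,-i)$, $(\alpha,-\alpha i)$; $E(P)$ denotes the exceptional curve over the point $P$. *)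

(* Defs.v *)
From HB Require Import structures.
From mathcomp Require Import all_boot all_order all_algebra.
From mathcomp Require Import complex.
From mathcomp Require Import Rstruct.
From mathcomp Require Import mpoly.
Set Implicit Arguments. Unset Strict Implicit. Unset Printing Implicit Defensive.
Import Order.TTheory GRing.Theory Num.Theory.
Local Open Scope ring_scope.

Definition C : Type := complex Rdefinitions.R.
HB.instance Definition _ := GRing.Field.on C.
HB.instance Definition _ := Num.ClosedField.on C.

(* Homogeneous polynomials in the projective coordinates x, y, z of P^2. *)
Notation poly3 := {mpoly C[3]}.
Definition i0 : 'I_3 := @Ordinal 3 0 isT.
Definition i1 : 'I_3 := @Ordinal 3 1 isT.
Definition i2 : 'I_3 := @Ordinal 3 2 isT.
Definition X : poly3 := 'X_i0.
Definition Y : poly3 := 'X_i1.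
Definition Z : poly3 := 'X_i2.

Definition pdeg (F : poly3) : nat := (msize F).-1.

Definition irreducible3 (F : poly3) : Prop :=
  (1 < msize F)%N /\
  forall G H : poly3, F = G * H -> (msize G <= 1)%N \/ (msize H <= 1)%N.

Definition plane_curve (F : poly3) : Prop :=
  F \is (pdeg F).-homog /\ irreducible3 F.

(* Multiplicity of F at the point [a : b : 1]: the order of vanishing at the
   origin of F(x + a, y + b, z + 1), i.e. the least degree of a monomial
   occurring in the translated polynomial. *)
Definition mult (F : poly3) (P : C * C) : nat :=
  let G := F \mPo [tuple X + P.1%:MP; Y + P.2%:MP; Z + 1%:MP] in
  foldr (fun m acc => minn (mdeg m) acc) (msize G) (msupp G).

(* The five blown-up points (in the affine chart z = 1). *)
Definition bpt (a : C) (k : 'I_5) : C * C :=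
  nth (0, 0) [:: (0, 0); (1, 'i); (a, a * 'i); (1, - 'i); (a, - (a * 'i))] k.

(* Irreducible curves on Y_a: either an exceptional curve E(P_k), or the strict
   transform of an irreducible plane curve F = 0 (F up to nonzero scalar). *)
Inductive curve : Type :=
  | Exc of 'I_5
  | Strict of poly3.

Definition is_curve (c : curve) : Prop :=
  match c with
  | Exc _ => True
  | Strict F => plane_curve F
  end.

Definition selfint (a : C) (c : curve) : int :=
  match c with
  | Exc _ => -1
  | Strict F => ((pdeg F ^ 2)%N)%:Z - (\sum_(k < 5) (mult F (bpt a k) ^ 2)%N)%:Z
  end.

Definition lines (a : C) : seq poly3 :=
  [:: X + 'i%:MP * Y;
      X - 'i%:MP * Y;
      X - Z;
      (a + 1)%:MP * X + ((a - 1) * 'i)%:MP * Y - (2 * a)%:MP * Z;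
      (a + 1)%:MP * X - ((a - 1) * 'i)%:MP * Y - (2 * a)%:MP * Z;
      X - a%:MP * Z].

(* Main.v *)
Require Import Defs.
From HB Require Import structures.
From mathcomp Require Import all_boot all_order all_algebra.
From mathcomp Require Import complex Rstruct mpoly.
From mathcomp Require Import ring zify.
Import Order.TTheory GRing.Theory Num.Theory.
Local Open Scope ring_scope.
Set Implicit Arguments. Unset Strict Implicit. Unset Printing Implicit Defensive.

Section Gen.
Variables (n k : nat) (S : comNzRingType) (f : {rmorphism C -> S}) (h : 'I_k -> S).

Lemma mmap_comp (p : {mpoly C[n]}) (lq : n.-tuple {mpoly C[k]}) :
  mmap f h (p \mPo lq) = mmap f (fun i => mmap f h (tnth lq i)) p.
Proof.
rewrite comp_mpolyE rmorph_sum [RHS]/mmap; apply: eq_bigr => m _.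
rewrite -mul_mpolyC rmorphM /= mmapC rmorph_prod /mmap1; congr (_ * _); apply: eq_bigr => i _.
by rewrite rmorphXn.
Qed.

Lemma mmap_eqh (h' : 'I_k -> S) (p : {mpoly C[k]}) : h =1 h' -> mmap f h p = mmap f h' p.
Proof.
move=> e; rewrite /mmap; apply: eq_bigr => m _; congr (_ * _).
by rewrite /mmap1; apply: eq_bigr => i _; rewrite e.
Qed.
End Gen.
Lemma prod_dvd (r : {poly C}) (ts : seq C) (e : C -> nat) : uniq ts ->
  (forall t, t \in ts -> ('X - t%:P)^+(e t) %| r) ->
  \prod_(t <- ts) ('X - t%:P)^+(e t) %| r.
Proof.
elim: ts => [|t ts IH] /=; first by rewrite big_nil dvd1p.
move=> /andP[tnin u] H; rewrite big_cons Gauss_dvdp.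
  by rewrite H ?mem_head // IH // => t' t'in; apply: H; rewrite inE t'in orbT.
apply: coprimep_expl; rewrite coprimep_sym coprimep_XsubC rootE horner_prod.
rewrite prodf_seq_neq0; apply/allP => t' t'in /=.
rewrite horner_exp hornerXsubC expf_neq0 // subr_eq0.
by apply: contraNneq tnin => ->.
Qed.

Lemma size_prodX (ts : seq C) (e : C -> nat) :
  size (\prod_(t <- ts) ('X - t%:P)^+(e t)) = (\sum_(t <- ts) e t).+1.
Proof.
rewrite size_prod_seq; last by move=> t _; rewrite expf_neq0 // polyXsubC_eq0.
under eq_bigr do rewrite size_exp_XsubC.
have -> : (\sum_(i <- ts) (e i).+1 = \sum_(i <- ts) e i + size ts)%N.
  by rewrite -sum1_size -big_split /=; apply: eq_bigr => i _; rewrite addn1.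
rewrite subSn ?leq_addl //.
by rewrite addnK.
Qed.

Lemma sum_mult_le (r : {poly C}) (ts : seq C) (e : C -> nat) : r != 0 -> uniq ts ->
  (forall t, t \in ts -> ('X - t%:P)^+(e t) %| r) ->
  (\sum_(t <- ts) e t < size r)%N.
Proof.
move=> r0 u H; rewrite -ltnS -size_prodX ltnS.
by apply: dvdp_leq => //; apply: prod_dvd.
Qed.

Lemma ord3P (i : 'I_3) : [\/ i = i0, i = i1 | i = i2].
Proof.
case: i => [[|[|[|//]]] Hi]; [constructor 1|constructor 2|constructor 3];
  by apply: val_inj.
Qed.

Definition hl (p d : C * C) (i : 'I_3) : {poly C} :=
  if i == i0 then d.1 *: 'X + p.1%:P else if i == i1 then d.2 *: 'X + p.2%:P else 1.

Definition restr (p d : C * C) (F : poly3) : {poly C} := mmap (@polyC C) (hl p d) F.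

Lemma foldr_min_le (T : eqType) (g : T -> nat) z (s : seq T) x :
  x \in s -> (foldr (fun m acc => minn (g m) acc) z s <= g x)%N.
Proof.
elim: s => [|y s IH] //=; rewrite inE => /orP[/eqP->|xin]; first exact: geq_minl.
by apply: leq_trans (geq_minr _ _) (IH xin).
Qed.

Lemma mmapXi (S : comNzRingType) (f : {rmorphism C -> S}) (h : 'I_3 -> S) i :
  mmap f h 'X_i = h i.
Proof. by rewrite mmapX mmap1U. Qed.

Lemma restr_dvd p d F t0 :
  ('X - t0%:P)^+(mult F (p.1 + t0 * d.1, p.2 + t0 * d.2)) %| restr p d F.
Proof.
rewrite /mult /=.
set G := F \mPo _.
pose ci (i : 'I_3) := if i == i0 then d.1 else if i == i1 then d.2 else 0.
pose h' (i : 'I_3) := (ci i)%:P * ('X - t0%:P).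
have -> : restr p d F = mmap (@polyC C) h' G.
  rewrite /G mmap_comp /restr; apply: mmap_eqh => i.
  rewrite /hl /h' /ci; case: (ord3P i) => ->; rewrite /tnth /=.
  - by rewrite /X mmapD mmapXi mmapC /= -mul_polyC !rmorphD !rmorphM /=; ring.
  - by rewrite /Y mmapD mmapXi mmapC /= -mul_polyC !rmorphD !rmorphM /=; ring.
  - by rewrite /Z mmapD mmapXi mmapC /= mul0r add0r.
rewrite /mmap big_seq; apply: (big_ind (fun q => _ %| q)); first exact: dvdp0.
  by move=> x y hx hy; apply: dvdp_add.
move=> m mS; apply: dvdp_mull.
have mle := foldr_min_le mdeg (msize G) mS.
apply: dvdp_trans (dvdp_exp2l _ mle) _.
rewrite mdegE -prodrXr /mmap1.
apply: (big_ind2 (fun a b => a %| b)); first exact: dvd1p.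
  by move=> x1 x2 y1 y2; apply: dvdp_mul.
by move=> i _; apply: dvdp_exp2r; rewrite /h'; apply: dvdp_mull.
Qed.

Lemma size_hl p d i : (size (hl p d i) <= 2)%N.
Proof.
rewrite /hl; case: ifP => _; last case: ifP => _; last by rewrite size_poly1.
all: apply: leq_trans (size_polyD _ _) _; rewrite geq_max (leq_trans (size_polyC_leq1 _)) // andbT.
all: by apply: leq_trans (size_scale_leq _ _) _; rewrite size_polyX.
Qed.

Lemma size_restr p d F : (size (restr p d F) <= msize F)%N.
Proof.
rewrite /restr /mmap; apply: leq_trans (size_sum _ _ _) _.
apply/bigmax_leqP_seq => m mS _.
rewrite mul_polyC; apply: leq_trans (size_scale_leq _ _) _.
apply: leq_trans (msize_mdeg_lt mS); rewrite /mmap1.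
apply: leq_trans (size_poly_prod_leq _ _) _.
rewrite mdegE card_ord.
have H : forall i : 'I_3, (size (hl p d i ^+ m i) <= (m i).+1)%N.
  move=> i; apply: leq_trans (size_poly_exp_leq _ _) _.
  rewrite ltnS; have := size_hl p d i.
  case: (size _) => [|[|[|//]]] _ //=; rewrite ?mul0n ?mul1n //.
move: (H i0) (H i1) (H i2).
rewrite !big_ord_recr big_ord0 /=.
have -> : (ord_max : 'I_3) = i2 by apply: val_inj.
have -> : (widen_ord (leqnSn 2) ord_max : 'I_3) = i1 by apply: val_inj.
have -> : (widen_ord (leqnSn 2) (widen_ord (leqnSn 1) ord_max) : 'I_3) = i0 by apply: val_inj.
rewrite big_ord0 add0n; move: (size _) (size _) (size _) => A B D; lia.
Qed.

Definition lform (v : 'I_3 -> C) : poly3 := \sum_(k < 3) v k *: 'X_k.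
Definition substM (M : 'M[C]_3) : 3.-tuple poly3 := [tuple lform (fun k => M i k) | i < 3].

Lemma comp_lform v (lq : 3.-tuple poly3) :
  lform v \mPo lq = \sum_(k < 3) v k *: tnth lq k.
Proof.
rewrite /lform raddf_sum; apply: eq_bigr => k _.
rewrite /=; apply: (etrans (comp_mpolyZ _ _ _)); by rewrite comp_mpolyXU -tnth_nth.
Qed.

Lemma comp_substM p M N : (p \mPo substM M) \mPo substM N = p \mPo substM (M *m N).
Proof.
rewrite {1}/comp_mpoly mmap_comp; apply: mmap_eqh => i.
rewrite -/(comp_mpoly _ _) !tnth_mktuple comp_lform /lform.
under eq_bigr do rewrite tnth_mktuple scaler_sumr.
rewrite exchange_big /=; apply: eq_bigr => l _.
rewrite mxE scaler_suml; apply: eq_bigr => k _; by rewrite scalerA.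
Qed.

Lemma substM1 p : p \mPo substM 1%:M = p.
Proof.
rewrite -[RHS](comp_mpoly_id p); congr comp_mpoly; apply: eq_from_tnth => i.
rewrite !tnth_mktuple /lform (bigD1 i) //= mxE eqxx scale1r big1 ?addr0 //.
by move=> k /negbTE; rewrite mxE eq_sym => ->; rewrite scale0r.
Qed.

Lemma lform_homog v : lform v \is 1.-homog.
Proof.
rewrite /lform; apply: rpred_sum => k _; apply: rpredZ.
by rewrite dhomogX; apply/eqP; apply: mdeg1.
Qed.

Lemma homog_substM d F M : F \is d.-homog -> F \mPo substM M \is d.-homog.
Proof.
move=> hF; rewrite comp_mpolyE big_seq; apply: rpred_sum => m mS; apply: rpredZ.
have <- : mdeg m = d by apply: (dhomog_mf hF).
have H i : (tnth (substM M) i)^+(m i) \is (m i).-homog.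
  by have := dhomogMn (m i) (lform_homog (fun k => M i k)); rewrite mul1n tnth_mktuple.
rewrite mdegE !big_ord_recr !big_ord0 /= mul1r add0n.
by apply: dhomogM; [apply: dhomogM|]; apply: H.
Qed.

Lemma ord3_sum (g : 'I_3 -> nat) : (\sum_(i < 3) g i = g i0 + g i1 + g i2)%N.
Proof.
rewrite !big_ord_recr big_ord0 /= add0n.
have -> : (ord_max : 'I_3) = i2 by apply: val_inj.
have -> : (widen_ord (leqnSn 2) ord_max : 'I_3) = i1 by apply: val_inj.
by have -> : (widen_ord (leqnSn 2) (widen_ord (leqnSn 1) ord_max) : 'I_3) = i0 by apply: val_inj.
Qed.

Lemma ord3_prod (R : comNzRingType) (g : 'I_3 -> R) : \prod_(i < 3) g i = g i0 * g i1 * g i2.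
Proof.
rewrite !big_ord_recr big_ord0 /= mul1r.
have -> : (ord_max : 'I_3) = i2 by apply: val_inj.
have -> : (widen_ord (leqnSn 2) ord_max : 'I_3) = i1 by apply: val_inj.
by have -> : (widen_ord (leqnSn 2) (widen_ord (leqnSn 1) ord_max) : 'I_3) = i0 by apply: val_inj.
Qed.

Definition hv (i : 'I_3) : {poly C} := if i == i0 then 'X else if i == i1 then 1 else 0.

Lemma mmap1_hv m : mmap1 hv m = if m i2 == 0%N then 'X^(m i0) else 0.
Proof.
rewrite /mmap1 ord3_prod /hv /= expr1n mulr1 expr0n.
by case: eqP => _; rewrite ?mulr1 ?mulr0.
Qed.

Lemma mnm3_eq (m m' : 'X_{1..3}) : m i0 = m' i0 -> m i1 = m' i1 -> m i2 = m' i2 -> m = m'.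
Proof. by move=> e0 e1 e2; apply/mnmP => i; case: (ord3P i) => ->. Qed.

Lemma vanish_X2 d G : G \is d.-homog -> mmap (@polyC C) hv G = 0 ->
  forall m, m \in msupp G -> m i2 != 0%N.
Proof.
move=> hG h0 m0 m0S; apply/negP => /eqP m02.
have : (mmap (@polyC C) hv G)`_(m0 i0) = G@_m0.
  rewrite /mmap coef_sum (bigD1_seq m0) ?msupp_uniq //= coefCM mmap1_hv m02 eqxx.
  rewrite coefXn eqxx mulr1 big1_seq ?addr0 // => m /andP[mm0 mS].
  rewrite coefCM mmap1_hv; case: eqP => m2; last by rewrite coef0 mulr0.
  rewrite coefXn; case: eqP => m1; last by rewrite mulr0.
  exfalso; move/eqP: mm0; apply.
  have := dhomog_mf hG mS; have := dhomog_mf hG m0S.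
  move=> /= A B; move: A B; rewrite !mdegE !ord3_sum => A B.
  apply: mnm3_eq; lia.
move=> e; move: m0S; rewrite mcoeff_msupp -e; move: h0; rewrite /mmap => ->; by rewrite coef0 eqxx.
Qed.

Lemma divX2 (G : poly3) : (forall m, m \in msupp G -> m i2 != 0%N) ->
  G = 'X_i2 * \sum_(m <- msupp G) G@_m *: 'X_[(m - U_(i2))%MM].
Proof.
move=> H; rewrite {1}(mpolyE G) mulr_sumr big_seq [RHS]big_seq; apply: eq_bigr => m mS.
rewrite -scalerAr -mpolyXD; congr (_ *: 'X_[_]).
by rewrite addmC submK // lep1mP H.
Qed.

Lemma mmap_lform (S : comNzRingType) (f : {rmorphism C -> S}) (h : 'I_3 -> S) v :
  mmap f h (lform v) = f (v i0) * h i0 + f (v i1) * h i1 + f (v i2) * h i2.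
Proof.
rewrite /lform raddf_sum /=.
rewrite !big_ord_recr big_ord0 /= add0r.
have -> : (ord_max : 'I_3) = i2 by apply: val_inj.
have -> : (widen_ord (leqnSn 2) ord_max : 'I_3) = i1 by apply: val_inj.
have -> : (widen_ord (leqnSn 2) (widen_ord (leqnSn 1) ord_max) : 'I_3) = i0 by apply: val_inj.
by rewrite !mmapZ !mmapXi.
Qed.

Definition mk3 (a b c : C) (i : 'I_3) : C := if i == i0 then a else if i == i1 then b else c.
Definition cross (u v : 'I_3 -> C) : 'I_3 -> C :=
  mk3 (u i1 * v i2 - u i2 * v i1) (u i2 * v i0 - u i0 * v i2) (u i0 * v i1 - u i1 * v i0).
Definition dot (u v : 'I_3 -> C) : C := u i0 * v i0 + u i1 * v i1 + u i2 * v i2.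

Section Frame.
Variables (u v w : 'I_3 -> C).
Definition Mf : 'M[C]_3 := \matrix_(i, k) mk3 (u i) (v i) (w i) k.
Definition Nf : 'M[C]_3 :=
  \matrix_(k, j) (mk3 (cross v w j) (cross w u j) (cross u v j) k / dot (cross u v) w).

Lemma MfNf : dot (cross u v) w != 0 -> Mf *m Nf = 1%:M.
Proof.
move=> c0; apply/matrixP => i j; rewrite !mxE.
rewrite !big_ord_recr big_ord0 /= add0r.
have -> : (ord_max : 'I_3) = i2 by apply: val_inj.
have -> : (widen_ord (leqnSn 2) ord_max : 'I_3) = i1 by apply: val_inj.
have -> : (widen_ord (leqnSn 2) (widen_ord (leqnSn 1) ord_max) : 'I_3) = i0 by apply: val_inj.
rewrite !mxE; move: c0; rewrite /dot /cross /mk3 /=.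
by case: (ord3P i) => ->; case: (ord3P j) => -> /= c0; field.
Qed.
End Frame.

Definition Dv (d : C * C) := mk3 d.1 d.2 0.
Definition Pv (p : C * C) := mk3 p.1 p.2 1.

Lemma restr0_factor p d (w : 'I_3 -> C) F k : F \is k.-homog ->
  dot (cross (Dv d) (Pv p)) w != 0 -> restr p d F = 0 ->
  exists H, F = lform (cross (Dv d) (Pv p)) * H.
Proof.
move=> hF c0 r0.
set M := Mf (Dv d) (Pv p) w; set N := Nf (Dv d) (Pv p) w.
have MN : M *m N = 1%:M by apply: MfNf.
set F' := F \mPo substM M.
have e1 : restr p d F = mmap (@polyC C) hv F'.
  rewrite /F' /comp_mpoly mmap_comp /restr; apply: mmap_eqh => i.
  rewrite tnth_mktuple mmap_lform /hv /hl /= !mxE /Dv /Pv /=.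
  rewrite mulr1 mulr0 addr0.
  by case: (ord3P i) => -> /=; rewrite /mk3 /= ?mul_polyC // scale0r add0r.
have hF' : F' \is k.-homog by apply: homog_substM.
have v := vanish_X2 hF' (etrans (esym e1) r0).
have dv := divX2 v.
exists ((dot (cross (Dv d) (Pv p)) w)^-1 *: ((\sum_(m <- msupp F') F'@_m *: 'X_[(m - U_(i2))%MM]) \mPo substM N)).
rewrite -scalerAr scalerAl.
have -> : (dot (cross (Dv d) (Pv p)) w)^-1 *: lform (cross (Dv d) (Pv p)) = 'X_i2 \mPo substM N.
  rewrite comp_mpolyXU -tnth_nth tnth_mktuple /lform scaler_sumr; apply: eq_bigr => j _.
  by rewrite scalerA !mxE /mk3 /= mulrC.
rewrite -rmorphM /= -dv /F' comp_substM MN.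
by rewrite substM1.
Qed.

Lemma line_bound p d w F (ts : seq C) :
  F \is (pdeg F).-homog -> irreducible3 F -> uniq ts ->
  dot (cross (Dv d) (Pv p)) w != 0 ->
  (exists s, F = s%:MP * lform (cross (Dv d) (Pv p))) \/
  (\sum_(t <- ts) mult F ((p.1 + t * d.1)%R, (p.2 + t * d.2)%R) <= pdeg F)%N.
Proof.
move=> hF [Fs Firr] u c0.
have F0 : F != 0 by rewrite -msize_poly_eq0; case: (msize F) Fs.
have [r0|r0] := eqVneq (restr p d F) 0.
  left; have [H eH] := restr0_factor hF c0 r0.
  have [L1|H1] := Firr _ _ eH.
    exfalso; move: F0; rewrite eH (msize1_polyC L1).
    rewrite (dhomog_nemf_coeff (lform_homog _)); last by apply/eqP => /= e; have := @mdeg0 3; rewrite e.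
    by rewrite (mpolyC0 3 C) mul0r eqxx.
  have eh := msize1_polyC H1; exists H@_0; rewrite {1}eH {1}eh mulrC //.
right; rewrite /pdeg -ltnS (ltn_predK Fs).
apply: leq_trans (size_restr p d F).
apply: sum_mult_le => // t _; exact: restr_dvd.
Qed.

Lemma lformE v : lform v = v i0 *: X + v i1 *: Y + v i2 *: Z.
Proof.
rewrite /lform !big_ord_recr big_ord0 /= add0r.
have -> : (ord_max : 'I_3) = i2 by apply: val_inj.
have -> : (widen_ord (leqnSn 2) ord_max : 'I_3) = i1 by apply: val_inj.
by have -> : (widen_ord (leqnSn 2) (widen_ord (leqnSn 1) ord_max) : 'I_3) = i0 by apply: val_inj.
Qed.

Lemma lform_coef v k : (lform v)@_U_(k) = v k.
Proof.
rewrite lformE /X /Y /Z !mcoeffD !mcoeffZ !mcoeffX !eq_mnm1.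
by case: (ord3P k) => -> /=; rewrite ?mulr1 ?mulr0 ?addr0 ?add0r.
Qed.

Lemma lform_neq0 v k : v k != 0 -> lform v != 0.
Proof. by apply: contraNneq => e; rewrite -(lform_coef v k) e mcoeff0. Qed.

Lemma foldr_min_ge1 (T : eqType) (g : T -> nat) z (s : seq T) :
  (1 <= z)%N -> (forall x, x \in s -> 1 <= g x)%N ->
  (1 <= foldr (fun m acc => minn (g m) acc) z s)%N.
Proof.
move=> z1; elim: s => [|y s IH] //= H.
rewrite leq_min H ?mem_head // IH // => x xs; apply: H.
by rewrite inE xs orbT.
Qed.

Lemma homog1_msize (G : poly3) : G != 0 -> G \is 1.-homog -> msize G = 2.
Proof.
move=> G0 hG; have e := dhomog_uniq G0 (dhomog_msize hG) hG.
have pos : (0 < msize G)%N by rewrite lt0n msize_poly_eq0.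
by rewrite -(prednK pos) e.
Qed.

Lemma shift_lform v Q :
  lform v \mPo [tuple X + Q.1%:MP; Y + Q.2%:MP; Z + 1%:MP] = lform v + (dot v (Pv Q))%:MP.
Proof.
rewrite comp_lform !big_ord_recr big_ord0 /= add0r.
have -> : (ord_max : 'I_3) = i2 by apply: val_inj.
have -> : (widen_ord (leqnSn 2) ord_max : 'I_3) = i1 by apply: val_inj.
have -> : (widen_ord (leqnSn 2) (widen_ord (leqnSn 1) ord_max) : 'I_3) = i0 by apply: val_inj.
rewrite lformE /dot /Pv /mk3 /tnth /= !rmorphD !rmorphM /= !rmorph1 -!mul_mpolyC.
ring.
Qed.

Lemma mult_lin_ge1 (v : 'I_3 -> C) s Q : s != 0 -> lform v != 0 ->
  dot v (Pv Q) = 0 -> (1 <= mult (s%:MP * lform v) Q)%N.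
Proof.
move=> s0 v0 e; rewrite /mult.
rewrite rmorphM /= comp_mpolyC shift_lform e rmorph0 addr0 mul_mpolyC.
have G0 : s *: lform v != 0 by rewrite scaler_eq0 negb_or s0.
have hG : s *: lform v \is 1.-homog by apply: rpredZ; apply: lform_homog.
apply: foldr_min_ge1; first by rewrite homog1_msize.
move=> m mS; rewrite (dhomog_mf hG mS) //.
Qed.

Lemma ii : 'i * 'i = -1 :> C.
Proof. by rewrite -expr2 sqrCi. Qed.

Definition k0 : 'I_5 := @Ordinal 5 0 isT.
Definition k1 : 'I_5 := @Ordinal 5 1 isT.
Definition k2 : 'I_5 := @Ordinal 5 2 isT.
Definition k3 : 'I_5 := @Ordinal 5 3 isT.
Definition k4 : 'I_5 := @Ordinal 5 4 isT.

Lemma sum5 (g : 'I_5 -> nat) : (\sum_(k < 5) g k = g k0 + g k1 + g k2 + g k3 + g k4)%N.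
Proof.
rewrite !big_ord_recr big_ord0 /= add0n.
by congr (_ + _ + _ + _ + _)%N; congr g; apply: val_inj.
Qed.

Lemma lform_mk3 (x y z : C) : lform (mk3 x y z) = x%:MP * X + y%:MP * Y + z%:MP * Z.
Proof. by rewrite lformE /mk3 /= !mul_mpolyC. Qed.

Lemma lform_ext v v' : v =1 v' -> lform v = lform v'.
Proof. by move=> e; rewrite /lform; apply: eq_bigr => k _; rewrite e. Qed.

Lemma lform_scale (c : C) v : lform (fun k => c * v k) = c%:MP * lform v.
Proof.
rewrite /lform mulr_sumr; apply: eq_bigr => k _.
by rewrite mul_mpolyC scalerA.
Qed.

Lemma line_bound2 a p d w F (ps : seq (C * 'I_5)) :
  F \is (pdeg F).-homog -> irreducible3 F -> uniq (map fst ps) ->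
  dot (cross (Dv d) (Pv p)) w != 0 ->
  (forall tk, tk \in ps -> ((p.1 + tk.1 * d.1)%R, (p.2 + tk.1 * d.2)%R) = bpt a tk.2) ->
  (exists s, F = s%:MP * lform (cross (Dv d) (Pv p))) \/
  (\sum_(tk <- ps) mult F (bpt a tk.2) <= pdeg F)%N.
Proof.
move=> hF irr u c0 e.
case: (@line_bound p d w F (map fst ps) hF irr u c0) => [H|B]; [by left | right].
move: B; rewrite big_map (eq_big_seq (fun tk => mult F (bpt a tk.2))) // => tk tkin; by rewrite e.
Qed.

Lemma finish a F s (c : C) L : (1 < msize F)%N -> F = s%:MP * (c%:MP * L) -> L \in lines a ->
  (exists (F' L' : poly3) (s' : C),
        Strict F = Strict F' /\ L' \in lines a /\ s' != 0 /\ F' = s'%:MP * L').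
Proof.
move=> Fs eF Lin; exists F, L, (s * c); split=> //; split=> //.
rewrite rmorphM /= -mulrA -eF; split=> //.
apply/negP => /eqP sc0; move: Fs eF; rewrite mulrA -rmorphM /= sc0 rmorph0 mul0r => Fs eF.
by move: Fs; rewrite eF msize0.
Qed.

Lemma rev_case a F s v (ka kb : 'I_5) : s != 0 -> lform v != 0 -> ka != kb ->
  dot v (Pv (bpt a ka)) = 0 -> dot v (Pv (bpt a kb)) = 0 -> F = s%:MP * lform v ->
  (selfint a (Strict F) < 0)%R.
Proof.
move=> s0 v0 kab e1 e2 eF.
have G0 : s *: lform v != 0 by rewrite scaler_eq0 negb_or s0.
have hG : s *: lform v \is 1.-homog by apply: rpredZ; apply: lform_homog.
have pd : pdeg F = 1%N by rewrite /pdeg eF mul_mpolyC homog1_msize.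
have m1 := mult_lin_ge1 s0 v0 e1; have m2 := mult_lin_ge1 s0 v0 e2.
rewrite -eF in m1 m2.
rewrite /selfint pd subr_lt0 ltz_nat (bigD1 ka) //= (bigD1 kb) 1?eq_sym //=.
move: m1 m2; set x := mult F _; set y := mult F _; move: (\sum_(i < 5 | _) _)%N => z.
nia.
Qed.

Ltac cfin := first [ring | (rewrite ii; ring) | (rewrite [RHS]mulrCA ii; ring)
  | (rewrite [RHS]mulrNN ii; ring) | (rewrite [RHS]mulrNN [RHS]mulrCA ii; ring)].

Ltac lid := rewrite -lform_scale; apply: lform_ext; let x := fresh "x" in intro x; case: (ord3P x) => ->;
  rewrite /Dv /Pv /cross /mk3 /=; cfin.

Section Lines.
Variable a : C.
Lemma idL1 : lform (cross (Dv (1,'i)) (Pv (0,0))) = 'i%:MP * lform (mk3 1 'i 0).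
Proof. lid. Qed.
Lemma idL2 : lform (cross (Dv (1,-'i)) (Pv (0,0))) = (-'i)%:MP * lform (mk3 1 (-'i) 0).
Proof. lid. Qed.
Lemma idL3 : lform (cross (Dv (0,-(2*'i))) (Pv (1,'i))) = (-(2*'i))%:MP * lform (mk3 1 0 (-1)).
Proof. lid. Qed.
Lemma idL4 : lform (cross (Dv (a-1,(a+1)*'i)) (Pv (1,-'i))) = 'i%:MP * lform (mk3 (a+1) ((a-1)*'i) (-(2*a))).
Proof. lid. Qed.
Lemma idL5 : lform (cross (Dv (a-1,-((a+1)*'i))) (Pv (1,'i))) = (-'i)%:MP * lform (mk3 (a+1) (-((a-1)*'i)) (-(2*a))).
Proof. lid. Qed.
Lemma idL6 : lform (cross (Dv (0,-(2*a*'i))) (Pv (a,a*'i))) = (-(2*a*'i))%:MP * lform (mk3 1 0 (-a)).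
Proof. lid. Qed.

Ltac lin E := rewrite (_ : lform _ = E); [by rewrite /lines !inE eqxx ?orbT |
  rewrite lform_mk3 ?rmorph1 ?rmorph0 ?rmorphN ?rmorphD ?rmorphM ?rmorph1 /=; ring].

Lemma inL1 : lform (mk3 1 'i 0) \in lines a.
Proof. lin (X + 'i%:MP * Y). Qed.
Lemma inL2 : lform (mk3 1 (-'i) 0) \in lines a.
Proof. lin (X - 'i%:MP * Y). Qed.
Lemma inL3 : lform (mk3 1 0 (-1)) \in lines a.
Proof. lin (X - Z). Qed.
Lemma inL4 : lform (mk3 (a+1) ((a-1)*'i) (-(2*a))) \in lines a.
Proof. lin ((a + 1)%:MP * X + ((a - 1) * 'i)%:MP * Y - (2 * a)%:MP * Z). Qed.
Lemma inL5 : lform (mk3 (a+1) (-((a-1)*'i)) (-(2*a))) \in lines a.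
Proof. lin ((a + 1)%:MP * X - ((a - 1) * 'i)%:MP * Y - (2 * a)%:MP * Z). Qed.
Lemma inL6 : lform (mk3 1 0 (-a)) \in lines a.
Proof. lin (X - a%:MP * Z). Qed.
End Lines.

Lemma ring_ii (E c : C) : E = c * ('i * 'i + 1) -> E = 0.
Proof. by move=> ->; rewrite ii addNr mulr0. Qed.

Lemma neq0_by (x y : C) : x = y -> y != 0 -> x != 0.
Proof. by move=> ->. Qed.

Lemma two_neq0 : (2 : C) != 0.
Proof. by rewrite pnatr_eq0. Qed.

Ltac ptfin := rewrite /bpt /=; congr (_, _); ring.
Ltac uniqfin ha0 ha1 := rewrite /= !inE ?negb_or ?(eq_sym (0:C) 1) ?oner_eq0 ?(eq_sym (0:C) _) ?ha0 ?(eq_sym (1:C) _) ?ha1.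
Ltac pts := let tk := fresh "tk" in intro tk; rewrite !inE; (repeat case/orP); (move/eqP=> ->); ptfin.
Ltac cnz y ha0 := rewrite /dot /Dv /Pv /cross /mk3 /=; apply: (neq0_by (y:=y)); [ring |
  rewrite ?oppr_eq0 ?mulf_neq0 ?two_neq0 ?neq0Ci ?ha0 ?oner_neq0 //].

Unset Implicit Arguments.

Theorem lemma6p1 (a : C) (ha0 : a != 0) (ha1 : a != 1) (c : curve) :
  is_curve c ->
  ((selfint a c < 0)%R <->
   ((exists k : 'I_5, c = Exc k) \/
    (exists (F L : poly3) (s : C),
        c = Strict F /\ L \in lines a /\ s != 0 /\ F = s%:MP * L))).
Proof.
case: c => [k|F] /=.
  by move=> _; split=> _; [left; exists k | rewrite ltrN10].
move=> [hF irr]; have Fs := proj1 irr.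
have F0 : F != 0 by rewrite -msize_poly_eq0; case: (msize F) Fs.
split; last first.
  case=> [[k //]|[F' [L [s [[<-] [Lin [s0 eF]]]]]]].
  move: Lin; rewrite /lines !inE.
  case/orP=> [/eqP eL|]; last case/orP=> [/eqP eL|]; last case/orP=> [/eqP eL|];
    last case/orP=> [/eqP eL|]; last case/orP=> [/eqP eL|/eqP eL].
  + apply: (@rev_case a F s (mk3 1 'i 0) k0 k1) => //.
    * by apply: (@lform_neq0 _ i0); rewrite /mk3 /= oner_neq0.
    * by rewrite /dot /Pv /bpt /mk3 /=; ring.
    * by apply: (@ring_ii _ 1); rewrite /dot /Pv /bpt /mk3 /=; ring.
    * by rewrite eF eL lform_mk3 ?rmorph1 ?rmorph0 ?rmorphN ?rmorphD ?rmorphM ?rmorph1 /=; ring.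
  + apply: (@rev_case a F s (mk3 1 (-'i) 0) k0 k3) => //.
    * by apply: (@lform_neq0 _ i0); rewrite /mk3 /= oner_neq0.
    * by rewrite /dot /Pv /bpt /mk3 /=; ring.
    * by apply: (@ring_ii _ (1)); rewrite /dot /Pv /bpt /mk3 /=; ring.
    * by rewrite eF eL lform_mk3 ?rmorph1 ?rmorph0 ?rmorphN ?rmorphD ?rmorphM ?rmorph1 /=; ring.
  + apply: (@rev_case a F s (mk3 1 0 (-1)) k1 k3) => //.
    * by apply: (@lform_neq0 _ i0); rewrite /mk3 /= oner_neq0.
    * by rewrite /dot /Pv /bpt /mk3 /=; ring.
    * by rewrite /dot /Pv /bpt /mk3 /=; ring.
    * by rewrite eF eL lform_mk3 ?rmorph1 ?rmorph0 ?rmorphN ?rmorphD ?rmorphM ?rmorph1 /=; ring.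
  + apply: (@rev_case a F s (mk3 (a+1) ((a-1)*'i) (-(2*a))) k3 k2) => //.
    * by apply: (@lform_neq0 _ i2); rewrite /mk3 /= oppr_eq0 mulf_neq0 ?two_neq0.
    * by apply: (@ring_ii _ (-(a-1))); rewrite /dot /Pv /bpt /mk3 /=; ring.
    * by apply: (@ring_ii _ (a*(a-1))); rewrite /dot /Pv /bpt /mk3 /=; ring.
    * by rewrite eF eL lform_mk3 ?rmorph1 ?rmorph0 ?rmorphN ?rmorphD ?rmorphM ?rmorph1 /=; ring.
  + apply: (@rev_case a F s (mk3 (a+1) (-((a-1)*'i)) (-(2*a))) k1 k4) => //.
    * by apply: (@lform_neq0 _ i2); rewrite /mk3 /= oppr_eq0 mulf_neq0 ?two_neq0.
    * by apply: (@ring_ii _ (-(a-1))); rewrite /dot /Pv /bpt /mk3 /=; ring.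
    * by apply: (@ring_ii _ (a*(a-1))); rewrite /dot /Pv /bpt /mk3 /=; ring.
    * by rewrite eF eL lform_mk3 ?rmorph1 ?rmorph0 ?rmorphN ?rmorphD ?rmorphM ?rmorph1 /=; ring.
  + apply: (@rev_case a F s (mk3 1 0 (-a)) k2 k4) => //.
    * by apply: (@lform_neq0 _ i0); rewrite /mk3 /= oner_neq0.
    * by rewrite /dot /Pv /bpt /mk3 /=; ring.
    * by rewrite /dot /Pv /bpt /mk3 /=; ring.
    * by rewrite eF eL lform_mk3 ?rmorph1 ?rmorph0 ?rmorphN ?rmorphD ?rmorphM ?rmorph1 /=; ring.
move=> neg; right.
case: (@line_bound2 a (0,0) (1,'i) (mk3 0 (-1) 0) F [:: (0,k0); (1,k1); (a,k2)] hF irr).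
- by uniqfin ha0 ha1.
- by cnz (1:C) ha0.
- by pts.
- by case=> s eF; apply: (@finish a F s 'i _ Fs _ (inL1 a)); rewrite eF idL1.
move=> B1.
case: (@line_bound2 a (0,0) (1,-'i) (mk3 0 (-1) 0) F [:: (0,k0); (1,k3); (a,k4)] hF irr).
- by uniqfin ha0 ha1.
- by cnz (1:C) ha0.
- by pts.
- by case=> s eF; apply: (@finish a F s (-'i) _ Fs _ (inL2 a)); rewrite eF idL2.
move=> B2.
case: (@line_bound2 a (1,'i) (0,-(2*'i)) (mk3 0 0 1) F [:: (0,k1); (1,k3)] hF irr).
- by uniqfin ha0 ha1.
- by cnz (2*'i : C) ha0.
- by pts.
- by case=> s eF; apply: (@finish a F s (-(2*'i)) _ Fs _ (inL3 a)); rewrite eF idL3.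
move=> B3.
case: (@line_bound2 a (1,-'i) (a-1,(a+1)*'i) (mk3 0 0 1) F [:: (0,k3); (1,k2)] hF irr).
- by uniqfin ha0 ha1.
- by cnz (-(2*a*'i) : C) ha0.
- by pts.
- by case=> s eF; apply: (@finish a F s 'i _ Fs _ (inL4 a)); rewrite eF idL4.
move=> B4.
case: (@line_bound2 a (1,'i) (a-1,-((a+1)*'i)) (mk3 0 0 1) F [:: (0,k1); (1,k4)] hF irr).
- by uniqfin ha0 ha1.
- by cnz (2*a*'i) ha0.
- by pts.
- by case=> s eF; apply: (@finish a F s (-'i) _ Fs _ (inL5 a)); rewrite eF idL5.
move=> B5.
case: (@line_bound2 a (a,a*'i) (0,-(2*a*'i)) (mk3 0 0 1) F [:: (0,k2); (1,k4)] hF irr).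
- by uniqfin ha0 ha1.
- by cnz (2*a*a*'i) ha0.
- by pts.
- by case=> s eF; apply: (@finish a F s (-(2*a*'i)) _ Fs _ (inL6 a)); rewrite eF idL6.
move=> B6; exfalso.
move: neg; rewrite subr_lt0 ltz_nat sum5.
move: B1 B2 B3 B4 B5 B6; rewrite !big_cons !big_nil /=.
move: (pdeg F) (mult F (bpt a k0)) (mult F (bpt a k1)) (mult F (bpt a k2))
  (mult F (bpt a k3)) (mult F (bpt a k4)) => d m0 m1 m2 m3 m4.
nia.
Qed.
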